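(* For $n\ge 1$, \begin{align*} (\mathfrak C_0+\mathfrak C_0+\mathfrak C_0+\mathfrak C_0)^n&=\frac{(2n)!}{6}\sum_{l=0}^{n}\frac{(-1)^{n-l}(2n-2l-3)!!\,(2l-1)(2l-2)(2l-3)}{2^{n-l}(n-l)!\,(2l)!}\mathfrak C_{2l}\\ &\quad+\frac{(2n)!}{6}\sum_{l=1}^{n}\frac{(-1)^{n-l}(2n-2l-3)!!\,(2l)(2l-1)(2l-3)^3}{2^{n-l}(n-l)!\,(2l)!}\mathfrak C_{2l-2}. \end{align*}
   Context: The numbers $\mathfrak C_{2n}$ (Cauchy numbers with level $2$) are defined by $\frac{t}{{\rm arcsinh}\,t}=\sum_{n=0}^\infty\mathfrak C_{2n}\frac{t^{2n}}{(2n)!}$. Convolution notation: $(\mathfrak C_{2j_1}+\cdots+\mathfrak C_{2j_k})^n:=\sum_{i_1+\cdots+i_k=n,\ i_1,\dots,i_k\ge0}\frac{(2n)!}{(2i_1)!\cdots(2i_k)!}\mathfrak C_{2i_1+2j_1}\cdots\mathfrak C_{2i_k+2j_k}$. Double factorials: $(2i-1)!!=(2i-1)(2i-3)\cdots1$ for $i\ge1$, $(-1)!!=1$, and $(-(2i+1))!!=\frac{(-1)^i}{(2i-1)!!}$ for $i\ge1$. *)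

(* Defs.v *)
From mathcomp Require Import all_boot all_order all_algebra.
Set Implicit Arguments. Unset Strict Implicit. Unset Printing Implicit Defensive.
Import Order.TTheory GRing.Theory Num.Theory.
Local Open Scope ring_scope.

(* Maclaurin coefficients of arcsinh(t)/t :
   arcsinh t = \sum_k (-1)^k (2k)! / (4^k (k!)^2 (2k+1)) t^(2k+1),
   so  arcsinh(t)/t = \sum_k asinh_coef k * t^(2k). *)
Definition asinh_coef (k : nat) : rat :=
  (-1) ^+ k * (k.*2)`!%:R / (4 ^ k * (k`! ^ 2) * k.*2.+1)%:R.

(* Coefficients b_n of the formal reciprocal series
   t/arcsinh t = 1 / (\sum_k asinh_coef k t^(2k)) = \sum_n b_n t^(2n):
   b_0 = 1, b_n = - \sum_(1 <= k <= n) asinh_coef k * b_(n-k).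
   [recip_seq n] is the list [b_0; ...; b_n]. *)
Fixpoint recip_seq (n : nat) : seq rat :=
  match n with
  | 0 => [:: 1]
  | m.+1 => let s := recip_seq m in
            rcons s (- \sum_(1 <= k < m.+2) asinh_coef k * nth 0 s (m.+1 - k))
  end.

(* Cauchy numbers with level 2:  t/arcsinh t = \sum_n C2 n * t^(2n)/(2n)!,
   i.e. [C2 n] is the paper's \mathfrak C_{2n}. *)
Definition C2 (n : nat) : rat := (n.*2)`!%:R * nth 0 (recip_seq n) n.

(* Convolution (C_{2 j_1} + ... + C_{2 j_k})^n :=
   \sum_{i_1+...+i_k = n} (2n)!/((2i_1)!...(2i_k)!) C_{2i_1+2j_1} ... C_{2i_k+2j_k} *)
Definition convC (k : nat) (j : 'I_k -> nat) (n : nat) : rat :=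
  \sum_(i : {ffun 'I_k -> 'I_n.+1} | (\sum_(r < k) (i r : nat))%N == n)
     ((n.*2)`!%:R / (\prod_(r < k) ((i r : nat).*2)`!)%:R *
      \prod_(r < k) C2 (i r + j r)).

(* Odd double factorial: [oddfact m] = (2m-1)!! for m : int, with
   (2i-1)!! = (2i-1)(2i-3)...1 (i >= 1), (-1)!! = 1, and
   (-(2i+1))!! = (-1)^i / (2i-1)!! for i >= 1. *)
Definition oddfact_nat (i : nat) : nat := \prod_(1 <= r < i.+1) r.*2.-1.
Definition oddfact (m : int) : rat :=
  match m with
  | Posz i => (oddfact_nat i)%:R
  | Negz i => (* m = -(i+1), 2m-1 = -(2(i+1)+1) *)
      (-1) ^+ i.+1 / (oddfact_nat i.+1)%:R
  end.

(* Main.v *)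
Require Import Defs.
From mathcomp Require Import all_boot all_order all_algebra.
From mathcomp Require Import zify ring lra.
Import Order.TTheory GRing.Theory Num.Theory.
Local Open Scope ring_scope.

Definition bb (k : nat) : rat := nth 0 (recip_seq k) k.

Lemma size_recip m : size (recip_seq m) = m.+1.
Proof. by elim: m => //= m IH; rewrite size_rcons IH. Qed.

Lemma nth_recip m k : (k <= m)%N -> nth 0 (recip_seq m) k = bb k.
Proof.
elim: m => [|m IH] Hk; first by have -> : k = 0%N by lia.
have [Hkm|Hkm] := leqP k m.
  by rewrite /= nth_rcons size_recip ltnS Hkm IH.
have -> : k = m.+1 by lia.
by [].
Qed.

Lemma bbS m : bb m.+1 = - \sum_(k < m.+1) asinh_coef k.+1 * bb (m - k).
Proof.
rewrite /bb /= nth_rcons size_recip ltnn eqxx.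
rewrite big_add1 /= big_mkord; congr (- _); apply: eq_bigr => k _.
by rewrite nth_recip ?subSS // leq_subr.
Qed.

Lemma asinh0 : asinh_coef 0 = 1.
Proof. by rewrite /asinh_coef /= expr0 mul1r. Qed.

Lemma bb0 : bb 0 = 1.
Proof. by []. Qed.

Lemma recip_conv i :
  \sum_(j < i.+1) bb (i - j) * asinh_coef j = (i == 0%N)%:R.
Proof.
case: i => [|m]; first by rewrite big_ord_recl big_ord0 /= bb0 asinh0 addr0 mulr1.
rewrite big_ord_recl /= subn0 asinh0 mulr1 bbS.
rewrite [X in _ + X](_ : _ = \sum_(k < m.+1) asinh_coef k.+1 * bb (m - k)).
  by rewrite addNr.
by apply: eq_bigr => k _; rewrite /bump /= add1n subSS mulrC.
Qed.

Definition ww (k : nat) : rat := asinh_coef k * (k.*2.+1)%:R.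
Definition cc (m : nat) : rat :=
  (-1) ^+ m * oddfact (m%:Z - 1) / ((2 ^ m)%:R * m`!%:R).

Lemma nz {k : nat} : (0 < k)%N -> (k%:R : rat) != 0.
Proof. by rewrite pnatr_eq0 -lt0n. Qed.

Lemma add1nz (m : nat) : (1 + m%:R : rat) != 0.
Proof. by rewrite addrC natr1 pnatr_eq0. Qed.

Ltac nzs := rewrite ?add1nz -?natrM -?natrD -?natrX ?pnatr_eq0 ?add1nz -?lt0n ?fact_gt0 ?expn_gt0 /=; try lia.

Lemma ww_rec k : ww k.+1 * (k.+1.*2)%:R = - (ww k * (k.*2.+1)%:R).
Proof.
rewrite /ww /asinh_coef doubleS !factS !expnS exprS expnMn !natrM !natrX.
rewrite -!muln2. field.
nzs.
Qed.

Lemma ofnS j : oddfact_nat j.+1 = (oddfact_nat j * j.*2.+1)%N.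
Proof. by rewrite /oddfact_nat big_nat_recr //= doubleS. Qed.

Lemma of_pos (k : nat) : oddfact (k.+1%:Z - 1) = (oddfact_nat k)%:R.
Proof. by have -> : (k.+1%:Z - 1 = k%:Z)%R by rewrite -addn1 PoszD addrK. Qed.

Lemma of_m1 : oddfact (0%:Z - 1) = -1.
Proof.
rewrite sub0r /oddfact /= /oddfact_nat big_nat1 expr1.
by have -> : (0.*2.+1)%:R = 1 :> rat by []; rewrite divr1.
Qed.

Lemma cc_rec k : cc k.+1 * (k.+1.*2)%:R = cc k * (1 - (k.*2)%:R).
Proof.
rewrite /cc of_pos; case: k => [|j].
  rewrite of_m1 /oddfact_nat big_geq //=; field.
rewrite of_pos ofnS doubleS !factS !expnS exprS !natrM -!muln2. field. nzs.
Qed.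

Section QS.
Variable M : nat.
Local Notation N := M.+1.
Definition hX : {poly rat} := 'X^N.
Local Notation Q := {poly %/ hX}.
Definition iq (p : {poly rat}) : Q := in_qpoly hX p.

Lemma iq_val p : (iq p : {poly rat}) = take_poly N p.
Proof. by rewrite /= mk_monic_Xn Pdiv.RingMonic.take_poly_rmodp. Qed.

Lemma size_Q (q : Q) : (size (q : {poly rat}) <= N)%N.
Proof. have E : size (mk_monic hX) = N.+1 by rewrite mk_monic_Xn size_polyXn.
rewrite -ltnS -E; exact: size_mk_monic. Qed.

Lemma iqK (q : Q) : iq q = q.
Proof. apply: val_inj; change ((iq q : {poly rat}) = (q : {poly rat})). by rewrite iq_val take_poly_id // size_Q. Qed.

Lemma eqQ (p q : {poly rat}) : (forall i, (i < N)%N -> p`_i = q`_i) -> iq p = iq q.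
Proof.
move=> H; apply: val_inj; change ((iq p : {poly rat}) = (iq q : {poly rat})); rewrite !iq_val; apply/polyP => i.
by rewrite !coef_take_poly; case: ifP => // /H.
Qed.

Lemma coefQ (p q : {poly rat}) i : iq p = iq q -> (i < N)%N -> p`_i = q`_i.
Proof.
move=> /(congr1 (fun r : Q => (r : {poly rat}))); rewrite !iq_val => E Hi.
have := congr1 (fun r : {poly rat} => r`_i) E.
by rewrite /= !coef_take_poly Hi.
Qed.

Lemma iqD p q : iq (p + q) = iq p + iq q. Proof. exact: rmorphD. Qed.
Lemma iqN p : iq (- p) = - iq p. Proof. exact: rmorphN. Qed.
Lemma iqM p q : iq (p * q) = iq p * iq q. Proof. exact: rmorphM. Qed.
Lemma iq1 : iq 1 = 1. Proof. exact: rmorph1. Qed.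
Lemma iqMn p k : iq (p *+ k) = iq p *+ k. Proof. exact: rmorphMn. Qed.

Fact th_key : unit. Proof. by []. Qed.
Definition th := locked_with th_key (fun p : {poly rat} => 'X * p^`() *+ 2).
Lemma thE p : th p = 'X * p^`() *+ 2. Proof. by rewrite /th unlock. Qed.

Lemma coef_th (p : {poly rat}) i : (th p)`_i = p`_i * (i.*2)%:R.
Proof.
rewrite !thE coefMn coefXM; case: i => [|i] /=; first by rewrite mulr0 mul0rn.
by rewrite coef_deriv -mulrnA muln2 mulr_natr. Qed.

Lemma thD p q : th (p + q) = th p + th q.
Proof. by rewrite !thE derivD mulrDr mulrnDl. Qed.
Lemma thN p : th (- p) = - th p.
Proof. by rewrite !thE derivN mulrN mulNrn. Qed.
Lemma thM p q : th (p * q) = th p * q + p * th q.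
Proof. rewrite !thE derivM mulrDr mulrnDl; ring. Qed.
Lemma th1 : th 1 = 0.
Proof. by rewrite !thE derivC mulr0 mul0rn. Qed.
Lemma thX : th 'X = 'X *+ 2.
Proof. by rewrite !thE derivX mulr1. Qed.

Definition Th (q : Q) : Q := iq (th q).

Lemma iq_th p : iq (th p) = Th (iq p).
Proof.
apply: eqQ => i Hi; rewrite !coef_th iq_val coef_take_poly Hi //.
Qed.

Lemma ThD a b : Th (a + b) = Th a + Th b.
Proof. by rewrite /Th poly_of_qpolyD thD iqD. Qed.
Lemma ThN a : Th (- a) = - Th a.
Proof. by rewrite -[a]iqK -iqN -!iq_th thN iqN. Qed.
Lemma ThM a b : Th (a * b) = Th a * b + a * Th b.
Proof.
by rewrite -[a]iqK -[b]iqK -iqM -!iq_th thM iqD !iqM !iqK.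
Qed.
Lemma Th1 : Th 1 = 0.
Proof. by rewrite -iq1 -iq_th th1 /iq rmorph0. Qed.


Lemma iq0 : iq 0 = 0. Proof. exact: rmorph0. Qed.
Lemma ThX : Th (iq 'X) = iq 'X *+ 2.
Proof. by rewrite -iq_th thX iqMn. Qed.

Lemma coefP (f : nat -> rat) i : (i < N)%N -> (\poly_(j < N) f j)`_i = f i.
Proof. by rewrite coef_poly => ->. Qed.

Lemma coef1X (p : {poly rat}) i :
  ((1 + 'X) * p)`_i = p`_i + (if i == 0%N then 0 else p`_i.-1).
Proof. by rewrite mulrDl mul1r coefD coefXM. Qed.

Definition Gp : {poly rat} := \poly_(i < N) bb i.
Definition Up : {poly rat} := \poly_(i < N) asinh_coef i.
Definition Wp : {poly rat} := \poly_(i < N) ww i.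
Definition Sp : {poly rat} := \poly_(i < N) cc i.

Lemma F1 : iq Gp * iq Up = 1.
Proof.
rewrite -iqM -iq1; apply: eqQ => i Hi; rewrite coefMr coef1 -recip_conv.
apply: eq_bigr => j _; rewrite !coefP //; last by lia.
have := ltn_ord j; lia.
Qed.

Lemma F2 : Th (iq Up) = iq Wp - iq Up.
Proof.
rewrite -iq_th -iqN -iqD; apply: eqQ => i Hi.
rewrite coef_th coefD coefN !coefP // /ww -natr1; ring.
Qed.

Lemma F3 : (1 + iq 'X) * Th (iq Wp) = - (iq 'X * iq Wp).
Proof.
rewrite -iq_th -iq1 -iqD -!iqM -iqN; apply: eqQ => i Hi.
rewrite coef1X coefN coefXM !coef_th; case: i Hi => [|k] Hi /=.
  by rewrite mulr0 addr0 oppr0.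
rewrite !coefP //; last by lia.
rewrite ww_rec -natr1; ring.
Qed.

Lemma F4 : (1 + iq 'X) * Th (iq Sp) = iq 'X * iq Sp.
Proof.
rewrite -iq_th -iq1 -iqD -!iqM; apply: eqQ => i Hi.
rewrite coef1X coefXM !coef_th; case: i Hi => [|k] Hi /=.
  by rewrite mulr0 addr0.
rewrite !coefP //; last by lia.
rewrite cc_rec; ring.
Qed.

Lemma uniqQ (p : {poly rat}) m :
  iq ((1 + 'X) * th p) = iq ('X * p) *+ m -> p`_0 = 0 -> iq p = 0.
Proof.
move=> E H0; rewrite -iqMn in E.
have Hc : forall i, (i < N)%N -> p`_i = 0.
  elim=> [//|i IH] Hi.
  have := @coefQ _ _ _ E Hi.
  rewrite coef1X coefMn coefXM !coef_th /= IH ?(ltnW Hi) // mul0r addr0 mul0rn.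
  by move/eqP; rewrite mulf_eq0 pnatr_eq0 doubleS orbF => /eqP.
rewrite -iq0; apply: eqQ => i Hi; rewrite coef0; exact: Hc.
Qed.

Lemma cc0 : cc 0 = -1.
Proof. by rewrite /cc of_m1 expr0 mul1r expn0 fact0 mulr1n mulr1 divr1. Qed.
Lemma ww0 : ww 0 = 1.
Proof. by rewrite /ww asinh0 mul1r. Qed.

Lemma hsw : iq Sp * iq Wp = -1.
Proof.
apply/eqP; rewrite -addr_eq0; apply/eqP.
rewrite -iqM -iq1 -iqD; apply: (@uniqQ _ 0).
  rewrite mulr0n !(iqM, iqD, iq1, iq_th, ThD, ThM, Th1).
  transitivity (iq Wp * ((1 + iq 'X) * Th (iq Sp)) + iq Sp * ((1 + iq 'X) * Th (iq Wp))).
    ring.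
  rewrite F3 F4; ring.
rewrite coefD coef1 coefM big_ord1 !coefP // cc0 ww0 /=; ring.
Qed.

Lemma hss : iq Sp * iq Sp = 1 + iq 'X.
Proof.
apply/eqP; rewrite -subr_eq0; apply/eqP.
rewrite -iqM -iq1 -iqD -iqN -iqD; apply: (@uniqQ _ 2).
  rewrite !(iqM, iqD, iqN, iq1, iq_th, ThD, ThN, ThM, Th1) ThX.
  transitivity ((iq Sp * ((1 + iq 'X) * Th (iq Sp))) *+ 2 - (1 + iq 'X) * (iq 'X *+ 2)).
    ring.
  rewrite F4; ring.
rewrite coefB coefD coef1 coefX coefM big_ord1 !coefP // cc0 /=; ring.
Qed.


Local Notation g := (iq Gp).
Local Notation u := (iq Up).
Local Notation w := (iq Wp).
Local Notation s := (iq Sp).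
Local Notation x := (iq 'X).

Lemma mainQ :
  s * (Th (Th (Th g)) - 6 * Th (Th g) + 11 * Th g - 6 * g
       + x * (Th (Th (Th g)) - 3 * Th (Th g) + 3 * Th g - g)) = 6 * g ^+ 4.
Proof.
have hw2 : w * w * (1 + x) = 1.
  rewrite -hss; transitivity ((s * w) ^+ 2); first ring.
  by rewrite hsw; ring.
have hx : x * (w * w) = 1 - w * w.
  transitivity (w * w * (1 + x) - w * w); first ring.
  by rewrite hw2.
have ew : Th w = w * w * w - w.
  transitivity (Th w * (w * w * (1 + x))); first by rewrite hw2 mulr1.
  transitivity (w * w * ((1 + x) * Th w)); first ring.
  rewrite F3; transitivity (- (w * (x * (w * w)))); first ring.
  by rewrite hx; ring.
have h0 : Th g * u + g * (w - u) = 0 by rewrite -F2 -ThM F1 Th1.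
have e1 : Th g = g - g * g * w.
  transitivity (Th g * (g * u)); first by rewrite F1 mulr1.
  transitivity (g * (Th g * u + g * (w - u)) - g * g * w + g * (g * u)); first ring.
  by rewrite h0 F1; ring.
set T := (X in s * X).
have K : w * w * T = -6 * g ^+ 4 * (w * w * w).
  rewrite /T.
  transitivity (w * w * (Th (Th (Th g)) - 6 * Th (Th g) + 11 * Th g - 6 * g)
     + (x * (w * w)) * (Th (Th (Th g)) - 3 * Th (Th g) + 3 * Th g - g)); first ring.
  rewrite hx !(ThD, ThN, ThM, e1, ew); ring.
transitivity (s * s * s * (w * w * T)).
  transitivity (s * T * ((s * w) * (s * w))); first by rewrite hsw; ring.
  ring.
rewrite K; transitivity (-6 * g ^+ 4 * ((s * w) * (s * w) * (s * w))); first ring.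
by rewrite hsw; ring.
Qed.

End QS.

Lemma prod_mono (a : 'I_4 -> rat) (e : 'I_4 -> nat) :
  \prod_(r < 4) (a r *: ('X^(e r) : {poly rat})) = (\prod_(r < 4) a r) *: 'X^(\sum_(r < 4) e r).
Proof.
rewrite -mul_polyC rmorph_prod -prodrXr -big_split /=.
by apply: eq_bigr => r _; rewrite mul_polyC.
Qed.

Lemma G4coef n : (Gp n ^+ 4)`_n =
  \sum_(i : {ffun 'I_4 -> 'I_n.+1} | (\sum_(r < 4) (i r : nat))%N == n) \prod_(r < 4) bb (i r).
Proof.
have -> : Gp n ^+ 4 = \prod_(r < 4) Gp n by rewrite prodr_const card_ord.
rewrite /Gp poly_def bigA_distr_bigA /= coef_sum [RHS]big_mkcond /=.
apply: eq_bigr => f _; rewrite prod_mono coefZ coefXn eq_sym.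
by case: eqP => _; rewrite ?mulr1 ?mulr0.
Qed.

Lemma stepA n : convC (fun _ : 'I_4 => 0%N) n = (n.*2)`!%:R * (Gp n ^+ 4)`_n.
Proof.
rewrite G4coef /convC big_distrr /=; apply: eq_bigr => f _.
have -> : \prod_(r < 4) C2 (f r + 0) = (\prod_(r < 4) ((f r : nat).*2)`!)%:R * \prod_(r < 4) bb (f r).
  by rewrite natr_prod -big_split /=; apply: eq_bigr => r _; rewrite addn0.
have H : (\prod_(r < 4) ((f r : nat).*2)`!)%:R != 0 :> rat.
  by rewrite pnatr_eq0 -lt0n prodn_gt0 // => r; rewrite fact_gt0.
by field.
Qed.

Definition Tp n : {poly rat} :=
  th (th (th (Gp n))) - th (th (Gp n)) *+ 6 + th (Gp n) *+ 11 - Gp n *+ 6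
  + 'X * (th (th (th (Gp n))) - th (th (Gp n)) *+ 3 + th (Gp n) *+ 3 - Gp n).

Lemma iqX M p k : iq M (p ^+ k) = iq M p ^+ k.
Proof. exact: rmorphXn. Qed.

Lemma stepB1 n : iq n (Sp n * Tp n) = iq n (Gp n ^+ 4 *+ 6).
Proof.
rewrite /Tp iqMn iqX !(iqM, iqD, iqN, iqMn, iq_th).
transitivity (6 * iq n (Gp n) ^+ 4); last ring.
rewrite -(mainQ n); ring.
Qed.

Lemma coefTp n j : (j <= n)%N -> (Tp n)`_j =
  bb j * ((j.*2)%:R ^+ 3 - 6 * (j.*2)%:R ^+ 2 + 11 * (j.*2)%:R - 6)
  + (if j == 0%N then 0 else
      bb j.-1 * ((j.-1.*2)%:R ^+ 3 - 3 * (j.-1.*2)%:R ^+ 2 + 3 * (j.-1.*2)%:R - 1)).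
Proof.
move=> Hj; rewrite /Tp !(coefD, coefN, coefMn) coefXM !coef_th coefP; last by lia.
case: j Hj => [|k] Hk /=; first by rewrite addr0; ring.
rewrite !(coefD, coefN, coefMn) !coef_th coefP; last by lia.
ring.
Qed.

Lemma stepB n : (Gp n ^+ 4)`_n *+ 6 = \sum_(j < n.+1) cc (n - j) * (Tp n)`_j.
Proof.
rewrite -coefMn (@coefQ n _ _ n (esym (stepB1 n))) // coefMr.
apply: eq_bigr => j _; rewrite coefP //; lia.
Qed.


Lemma C2E k : C2 k = (k.*2)`!%:R * bb k. Proof. by []. Qed.

Lemma T1 n l : (l <= n)%N ->
  (-1) ^+ (n - l) * oddfact (n%:Z - l%:Z - 1) *
    ((2 * l%:R - 1) * (2 * l%:R - 2) * (2 * l%:R - 3)) /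
    ((2 ^ (n - l))%:R * (n - l)`!%:R * (l.*2)`!%:R) * C2 l
  = cc (n - l) * (bb l * ((l.*2)%:R ^+ 3 - 6 * (l.*2)%:R ^+ 2 + 11 * (l.*2)%:R - 6)).
Proof.
move=> Hl; rewrite /cc C2E subzn //.
rewrite -!muln2 !natrM.
field. nzs.
Qed.

Lemma T2 n k : (k < n)%N ->
  (-1) ^+ (n - k.+1) * oddfact (n%:Z - k.+1%:Z - 1) *
    ((2 * k.+1%:R) * (2 * k.+1%:R - 1) * (2 * k.+1%:R - 3) ^+ 3) /
    ((2 ^ (n - k.+1))%:R * (n - k.+1)`!%:R * (k.+1.*2)`!%:R) * C2 k.+1.-1
  = cc (n - k.+1) * (bb k * ((k.*2)%:R ^+ 3 - 3 * (k.*2)%:R ^+ 2 + 3 * (k.*2)%:R - 1)).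
Proof.
move=> Hl; rewrite /cc C2E subzn // /= doubleS !factS.
rewrite -!muln2 !natrM.
field. nzs.
Qed.

Theorem theorem6 (n : nat) : (1 <= n)%N ->
  convC (fun _ : 'I_4 => 0%N) n =
    (n.*2)`!%:R / 6 *
      \sum_(0 <= l < n.+1)
        ((-1) ^+ (n - l) * oddfact (n%:Z - l%:Z - 1) *
           ((2 * l%:R - 1) * (2 * l%:R - 2) * (2 * l%:R - 3)) /
           ((2 ^ (n - l))%:R * (n - l)`!%:R * (l.*2)`!%:R) * C2 l)
  + (n.*2)`!%:R / 6 *
      \sum_(1 <= l < n.+1)
        ((-1) ^+ (n - l) * oddfact (n%:Z - l%:Z - 1) *
           ((2 * l%:R) * (2 * l%:R - 1) * (2 * l%:R - 3) ^+ 3) /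
           ((2 ^ (n - l))%:R * (n - l)`!%:R * (l.*2)`!%:R) * C2 l.-1).
Proof.
move=> _; rewrite stepA -mulrDr.
set S1 := \sum_(0 <= l < n.+1) _.
set S2 := \sum_(1 <= l < n.+1) _.
suff -> : S1 + S2 = (Gp n ^+ 4)`_n *+ 6 by rewrite -mulr_natr; field.
rewrite stepB.
rewrite (eq_bigr (fun j : 'I_n.+1 => cc (n - j) * (bb j * ((j.*2)%:R ^+ 3 - 6 * (j.*2)%:R ^+ 2 + 11 * (j.*2)%:R - 6))
  + cc (n - j) * (if (j : nat) == 0%N then 0 else
      bb (j : nat).-1 * (((j : nat).-1.*2)%:R ^+ 3 - 3 * ((j : nat).-1.*2)%:R ^+ 2 + 3 * ((j : nat).-1.*2)%:R - 1)))); last first.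
  move=> j _; rewrite coefTp -?mulrDr //; have := ltn_ord j; lia.
rewrite big_split /=; congr (_ + _).
  rewrite /S1 big_mkord; apply: eq_bigr => l _; apply: T1; have := ltn_ord l; lia.
rewrite -(big_mkord xpredT (fun j => cc (n - j) * (if j == 0%N then 0 else bb j.-1 * (((j.-1).*2)%:R ^+ 3 - 3 * ((j.-1).*2)%:R ^+ 2 + 3 * ((j.-1).*2)%:R - 1)))) .
rewrite big_ltn // /= mulr0 add0r /S2; apply: eq_big_nat => l /andP [H1 H2].
case: l H1 H2 => [//|k] _ Hk; rewrite T2 //.
Qed.
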